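(* Let $1\le d_1\le d_2$, let $G=(V,E)$ be a finite connected undirected unweighted $(d_1,d_2)$-bidegreed graph with $n$ vertices, and let $\alpha=d_2/d_1$. Then for every $\lambda\in[0,1]$ and every initial mutant set $S_0\subseteq V$, the expected absorption time of the $\lambda$-mixed Moran process with fitness $r$ is at most $O_r(n^4\alpha^2)$ if $r\ne 1$ (i.e., at most $C_r n^4\alpha^2$ with $C_r$ depending only on $r$), and at most $O(n^4\alpha^4)$ if $r=1$.
   Context: A graph is $(d_1,d_2)$-bidegreed, $d_1\le d_2$, if every vertex has degree in $\{d_1,d_2\}$. The $\lambda$-mixed Moran process on a connected graph $G=(V,E)$ with $n=|V|\ge 2$: each vertex hosts a resident (fitness $1$) or mutant (fitness $r>0$); the state is the mutant set $S_t\subseteq V$. Each step, independently: with probability $\lambda$ a Birth-death step (a vertex $u$ chosen with probability proportional to fitness among all vertices; a uniformly random neighbor of $u$ takes $u$'s type); with probability $1-\lambda$ a death-Birth step (a uniformly random vertex $v$ dies; a neighbor $u$ of $v$ chosen with probability proportional to fitness among the neighbors of $v$; $v$ takes $u$'s type). The absorption time is the expected number of steps until $S_t\in\{\emptyset,V\}$. *)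

(* Defs.v *)
From HB Require Import structures.
From mathcomp Require Import all_boot all_order all_algebra.
From mathcomp Require Import reals.
Set Implicit Arguments. Unset Strict Implicit. Unset Printing Implicit Defensive.
Import Order.TTheory GRing.Theory Num.Theory.
Local Open Scope ring_scope.

Section Moran.
Variables (R : realType) (T : finType) (e : rel T).

Definition simple_graph := symmetric e /\ irreflexive e.
Definition connected_graph := forall x y : T, connect e x y.
Definition deg (v : T) : nat := #|[set w | e v w]|.
Definition bidegreed (d1 d2 : nat) := forall v : T, deg v = d1 \/ deg v = d2.

(* fitness of vertex v in state S (S = mutant set) *)
Definition fit (r : R) (S : {set T}) (v : T) : R := if v \in S then r else 1.

Definition take_type (S : {set T}) (u w : T) : {set T} :=
  if u \in S then w |: S else S :\ w.

(* expectation of g(S_{t+1}) given S_t = S, for one step of the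
   lambda-mixed Moran process with fitness r *)
Definition step_expect (r lam : R) (g : {set T} -> R) (S : {set T}) : R :=
  let F := \sum_(u : T) fit r S u in
  lam * (\sum_(u : T) \sum_(w : T | e u w)
            (fit r S u / F) * (1 / (deg u)%:R) * g (take_type S u w))
  + (1 - lam) * (\sum_(v : T) \sum_(u : T | e v u)
            (1 / #|T|%:R) * (fit r S u / \sum_(x : T | e v x) fit r S x)
              * g (take_type S u v)).

Definition absorbing (S : {set T}) : bool := (S == set0) || (S == setT).

(* trunc_time r lam k S = E[min(tau, k)] for the process started at S,
   where tau is the absorption time.  The expected absorption time is
   E[tau] = sup_k E[min(tau, k)] (monotone convergence). *)
Fixpoint trunc_time (r lam : R) (k : nat) (S : {set T}) : R :=
  match k with
  | 0%N => 0
  | k'.+1 => if absorbing S then 0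
             else 1 + step_expect r lam (trunc_time r lam k') S
  end.

End Moran.

(* Main.v *)
Require Import Defs.
From HB Require Import structures.
From mathcomp Require Import all_boot all_order all_algebra.
From mathcomp Require Import reals ring lra.
Set Implicit Arguments. Unset Strict Implicit. Unset Printing Implicit Defensive.
Import Order.TTheory GRing.Theory Num.Theory.
Local Open Scope ring_scope.
Section Real.
Variable R : realFieldType.

Lemma ler_frac (a b c d : R) : 0 < a -> 0 < b -> (c / a <= d / b) = (c * b <= d * a).
Proof. by move=> a0 b0; rewrite ler_pdivlMr // mulrAC ler_pdivrMr. Qed.

Lemma addr_le0' (a b : R) : a <= 0 -> b <= 0 -> a + b <= 0.
Proof. lra. Qed.

Lemma edge_core (lam x1 x2 x3 y1 y2 z1 z2 pa pb : R) :
  lam * (pb * z2 - pa * y2) + (1 - lam) * (pb * y2 - pa * z2) = 0 ->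
  lam * x1 * pb * z2 + (1 - lam) * x3 * y1 * pb - lam * x2 * pa * y2 - (1 - lam) * x3 * z1 * pa
  = lam * (pb * z2 * (x1 - x3) + pa * y2 * (x3 - x2)) + x3 * (1 - lam) * ((y1 - y2) * pb + (z2 - z1) * pa).
Proof.
move=> hX.
have -> : lam * x1 * pb * z2 + (1 - lam) * x3 * y1 * pb - lam * x2 * pa * y2 - (1 - lam) * x3 * z1 * pa
  = lam * (pb * z2 * (x1 - x3) + pa * y2 * (x3 - x2)) + x3 * (1 - lam) * ((y1 - y2) * pb + (z2 - z1) * pa)
    + x3 * (lam * (pb * z2 - pa * y2) + (1 - lam) * (pb * y2 - pa * z2)) by ring.
by rewrite hX mulr0 addr0.
Qed.

Lemma edge_expr (lam r n F da db Da Db pa pb : R) :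
  lam * (pb / da - pa / db) + (1 - lam) * (pb / db - pa / da) = 0 ->
  (lam * (r / F * (1 / da)) + (1 - lam) * (1 / n * (r / Db))) * pb
    - (lam * (1 / F * (1 / db)) + (1 - lam) * (1 / n * (1 / Da))) * pa
  = lam * (pb * (1/da) * (r/F - 1/n) + pa * (1/db) * (1/n - 1/F))
    + 1/n * (1 - lam) * ((r/Db - 1/db) * pb + (1/da - 1/Da) * pa).
Proof.
move=> hX.
set E := lam * (pb / da - pa / db) + (1 - lam) * (pb / db - pa / da) in hX.
set RHS := (X in _ = X).
have -> : RHS = RHS + 1 / n * E by rewrite hX mulr0 addr0.
rewrite /RHS /E; ring.
Qed.

Lemma edge_ge (lam r n F da db Da Db pa pb : R) :
  0 <= lam <= 1 -> 0 < n -> 0 < F -> 0 < da -> 0 < db -> 0 < Da -> 0 < Db -> 0 <= pa -> 0 <= pb ->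
  lam * (pb / da - pa / db) + (1 - lam) * (pb / db - pa / da) = 0 ->
  n <= F -> F <= r * n -> da <= Da -> Db <= r * db ->
  0 <= (lam * (r / F * (1 / da)) + (1 - lam) * (1 / n * (r / Db))) * pb
    - (lam * (1 / F * (1 / db)) + (1 - lam) * (1 / n * (1 / Da))) * pa.
Proof.
move=> /andP[l0 l1] n0 F0 da0 db0 Da0 Db0 pa0 pb0 hX h1 h2 h3 h4.
rewrite edge_expr //.
have i1 : 0 <= r / F - 1 / n by rewrite subr_ge0 ler_frac // mul1r.
have i2 : 0 <= 1 / n - 1 / F by rewrite subr_ge0 ler_frac // !mul1r.
have i3 : 0 <= r / Db - 1 / db by rewrite subr_ge0 ler_frac // mul1r.
have i4 : 0 <= 1 / da - 1 / Da by rewrite subr_ge0 ler_frac // !mul1r.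
have p1 : 0 <= 1 / da by rewrite divr_ge0 // ltW.
have p2 : 0 <= 1 / db by rewrite divr_ge0 // ltW.
have p3 : 0 <= 1 / n by rewrite divr_ge0 // ltW.
apply: addr_ge0; apply: mulr_ge0 => //; rewrite ?subr_ge0 //.
  by apply: addr_ge0; apply: mulr_ge0 => //; apply: mulr_ge0.
  by apply: mulr_ge0 => //; rewrite subr_ge0.
by apply: addr_ge0; apply: mulr_ge0.
Qed.

Lemma edge_le (lam r n F da db Da Db pa pb : R) :
  0 <= lam <= 1 -> 0 < n -> 0 < F -> 0 < da -> 0 < db -> 0 < Da -> 0 < Db -> 0 <= pa -> 0 <= pb ->
  lam * (pb / da - pa / db) + (1 - lam) * (pb / db - pa / da) = 0 ->
  F <= n -> r * n <= F -> Da <= da -> r * db <= Db ->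
  (lam * (r / F * (1 / da)) + (1 - lam) * (1 / n * (r / Db))) * pb
    - (lam * (1 / F * (1 / db)) + (1 - lam) * (1 / n * (1 / Da))) * pa <= 0.
Proof.
move=> /andP[l0 l1] n0 F0 da0 db0 Da0 Db0 pa0 pb0 hX h1 h2 h3 h4.
rewrite edge_expr //.
have i1 : r / F - 1 / n <= 0 by rewrite subr_le0 ler_frac // mul1r.
have i2 : 1 / n - 1 / F <= 0 by rewrite subr_le0 ler_frac // !mul1r.
have i3 : r / Db - 1 / db <= 0 by rewrite subr_le0 ler_frac // mul1r.
have i4 : 1 / da - 1 / Da <= 0 by rewrite subr_le0 ler_frac // !mul1r.
have p1 : 0 <= 1 / da by rewrite divr_ge0 // ltW.
have p2 : 0 <= 1 / db by rewrite divr_ge0 // ltW.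
have p3 : 0 <= 1 / n by rewrite divr_ge0 // ltW.
have l2 : 0 <= 1 - lam by rewrite subr_ge0.
apply: addr_le0'.
  apply: mulr_ge0_le0 => //; apply: addr_le0'; apply: mulr_ge0_le0 => //; exact: mulr_ge0.
apply: mulr_ge0_le0; first exact: mulr_ge0.
by apply: addr_le0'; rewrite mulrC; apply: mulr_ge0_le0.
Qed.

Lemma mart_id (lam d1 d2 xa xb : R) : 0 <= lam <= 1 -> 0 < d1 -> d1 <= d2 ->
  (xa = d1 \/ xa = d2) -> (xb = d1 \/ xb = d2) ->
  let qa := lam * xa + (1 - lam) * (d1 + d2 - xa) in
  let qb := lam * xb + (1 - lam) * (d1 + d2 - xb) in
  lam * ((1 / qb) / xa - (1 / qa) / xb) + (1 - lam) * ((1 / qb) / xb - (1 / qa) / xa) = 0.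
Proof.
move=> /andP[l0 l1] d10 d12 ha hb qa qb.
have q1 : 0 < lam * d1 + (1 - lam) * (d1 + d2 - d1) by nra.
have q2 : 0 < lam * d2 + (1 - lam) * (d1 + d2 - d2) by nra.
have d20 : 0 < d2 by lra.
rewrite /qa /qb; case: ha => ->; case: hb => ->; field;
  rewrite ?gt_eqF //; apply/andP; split; rewrite ?gt_eqF //; apply/andP; split; rewrite ?gt_eqF //.
Qed.
End Real.

Section Aux.
Variables (R : realType) (T : finType) (e : rel T).
Hypothesis esym : symmetric e.

Definition DS (f : T -> T -> R) := \sum_(u : T) \sum_(w : T | e u w) f u w.

Lemma DSE f : DS f = \sum_u \sum_w (if e u w then f u w else 0).
Proof. by apply: eq_bigr => u _; rewrite big_mkcond. Qed.

Lemma DS_sym f : DS f = DS (fun u w => f w u).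
Proof.
rewrite !DSE exchange_big; apply: eq_bigr => u _; apply: eq_bigr => w _.
by rewrite esym.
Qed.

Lemma DSD f g : DS (fun u w => f u w + g u w) = DS f + DS g.
Proof. by rewrite /DS -big_split; apply: eq_bigr => u _; rewrite big_split. Qed.

Lemma DSZ c f : DS (fun u w => c * f u w) = c * DS f.
Proof. by rewrite /DS mulr_sumr; apply: eq_bigr => u _; rewrite mulr_sumr. Qed.

Lemma DS_ge0 f : (forall u w, e u w -> 0 <= f u w) -> 0 <= DS f.
Proof. by move=> H; apply: sumr_ge0 => u _; apply: sumr_ge0 => w; apply: H. Qed.

Lemma DS_le f g : (forall u w, e u w -> f u w <= g u w) -> DS f <= DS g.
Proof. by move=> H; apply: ler_sum => u _; apply: ler_sum => w; apply: H. Qed.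

Lemma DS_ge1 f a b : (forall u w, e u w -> 0 <= f u w) -> e a b -> f a b <= DS f.
Proof.
move=> H eab; rewrite /DS (bigD1 a) //= (bigD1 b) //=.
rewrite -addrA lerDl; apply: addr_ge0.
  by apply: sumr_ge0 => w /andP[? _]; apply: H.
by apply: sumr_ge0 => u _; apply: sumr_ge0 => w; apply: H.
Qed.

Variables (r lam : R).
Definition FF (S : {set T}) := \sum_(u : T) fit r S u.
Definition DD (S : {set T}) v := \sum_(x : T | e v x) fit r S x.
Definition Wt S u w := lam * ((fit r S u / FF S) * (1 / (deg e u)%:R))
   + (1 - lam) * ((1 / #|T|%:R) * (fit r S u / DD S w)).

Lemma se_eq g S : step_expect e r lam g S =
  DS (fun u w => Wt S u w * g (take_type S u w)).
Proof.
have -> : DS (fun u w => Wt S u w * g (take_type S u w)) =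
  DS (fun u w => lam * ((fit r S u / FF S) * (1 / (deg e u)%:R) * g (take_type S u w)))
  + DS (fun u w => (1 - lam) * ((1 / #|T|%:R) * (fit r S u / DD S w) * g (take_type S u w))).
  rewrite -DSD /DS; apply: eq_bigr => u _; apply: eq_bigr => w _.
  by rewrite /Wt; ring.
rewrite !DSZ /step_expect; congr (_ + _); congr (_ * _).
by rewrite [in RHS]DS_sym.
Qed.
Hypothesis rpos : 0 < r.
Hypothesis lam01 : 0 <= lam <= 1.
Hypothesis degpos : forall v, (0 < deg e v)%N.
Hypothesis npos : (0 < #|T|)%N.

Lemma fit_pos (S : {set T}) v : 0 < fit r S v.
Proof. by rewrite /fit; case: ifP. Qed.

Lemma FF_pos (S : {set T}) : 0 < FF S.
Proof.
have [x _] : exists x : T, true by case/card_gt0P: npos => x; exists x.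
rewrite /FF (bigD1 x) //=; apply: ltr_wpDr; last exact: fit_pos.
by apply: sumr_ge0 => ? _; apply/ltW/fit_pos.
Qed.

Lemma sum_deg (c : R) u : \sum_(w | e u w) c = (deg e u)%:R * c.
Proof. by rewrite sumr_const /deg cardsE mulr_natl. Qed.

Lemma DD_pos (S : {set T}) v : 0 < DD S v.
Proof.
have := degpos v; rewrite /deg card_gt0 => /set0Pn [x]; rewrite inE => evx.
rewrite /DD (bigD1 x) //=; apply: ltr_wpDr; last exact: fit_pos.
by apply: sumr_ge0 => ? _; apply/ltW/fit_pos.
Qed.

Lemma Wt_ge0 (S : {set T}) u w : 0 <= Wt S u w.
Proof.
case/andP: lam01 => l0 l1.
have := FF_pos S; have := DD_pos S w; have := fit_pos S u; have := degpos u.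
rewrite -(ltr0n R) => h1 h2 h3 h4.
rewrite /Wt; apply: addr_ge0; apply: mulr_ge0; rewrite ?subr_ge0 //;
  apply: mulr_ge0; rewrite ?divr_ge0 ?ltW //.
by rewrite ltr0n.
Qed.

Lemma DS_Wt (S : {set T}) : DS (Wt S) = 1.
Proof.
rewrite /Wt DSD !DSZ.
have -> : DS (fun u w => fit r S u / FF S * (1 / (deg e u)%:R)) = 1.
  rewrite /DS.
  under eq_bigr => u _ do rewrite sum_deg.
  under eq_bigr => u _ do rewrite mulrCA mul1r mulfV ?mulr1 ?pnatr_eq0 -?lt0n ?degpos //.
  by rewrite -mulr_suml mulfV // gt_eqF // FF_pos.
rewrite DS_sym.
have -> : DS (fun u w => fit r S w / DD S u) = #|T|%:R.
  rewrite /DS.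
  under eq_bigr => u _ do rewrite -mulr_suml -/(DD S u) mulfV ?gt_eqF ?DD_pos //.
  by rewrite sumr_const cardT -cardE.
rewrite div1r mulVf ?pnatr_eq0 -?lt0n //.
by rewrite !mulr1 addrC subrK.
Qed.

Lemma trunc_bound (y : {set T} -> R) (M s2 : R) :
  0 < s2 -> (forall S, 0 <= y S <= M) ->
  (forall S, ~~ absorbing S ->
     0 <= DS (fun u w => Wt S u w * (y (take_type S u w) - y S))
     /\ s2 <= DS (fun u w => Wt S u w * (y (take_type S u w) - y S) ^+ 2)) ->
  forall k S, trunc_time e r lam k S <= (4 * M ^+ 2 - (y S + M) ^+ 2) / s2.
Proof.
move=> s2pos yb Hd.
have Phi0 S : 0 <= (4 * M ^+ 2 - (y S + M) ^+ 2) / s2.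
  apply: divr_ge0; last exact: ltW.
  case/andP: (yb S) => h1 h2; rewrite subr_ge0; nra.
elim=> [|k IH] S /=; first exact: Phi0.
case: ifP => hab; first exact: Phi0.
have [hd hv] := Hd S (negbT hab).
rewrite se_eq.
apply: (le_trans (y := 1 + DS (fun u w => Wt S u w * ((4 * M ^+ 2 - (y (take_type S u w) + M) ^+ 2) / s2)))).
  rewrite lerD2l; apply: DS_le.
  by move=> u w _; apply: ler_wpM2l; [exact: Wt_ge0| exact: IH].
set P := (4 * M ^+ 2 - (y S + M) ^+ 2) / s2.
have -> : DS (fun u w => Wt S u w * ((4 * M ^+ 2 - (y (take_type S u w) + M) ^+ 2) / s2))
  = DS (fun u w => P * Wt S u w + (- (2 * (y S + M) / s2)) * (Wt S u w * (y (take_type S u w) - y S))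
       + (- (1 / s2)) * (Wt S u w * (y (take_type S u w) - y S) ^+ 2)).
  rewrite /DS; apply: eq_bigr => u _; apply: eq_bigr => w _.
  rewrite /P; ring.
rewrite !DSD !DSZ DS_Wt mulr1.
have h1 : 0 <= 2 * (y S + M) / s2 * DS (fun u w => Wt S u w * (y (take_type S u w) - y S)).
  apply: mulr_ge0 => //; apply: divr_ge0; last exact: ltW.
  case/andP: (yb S) => ? ?; nra.
have h2 : 1 <= 1 / s2 * DS (fun u w => Wt S u w * (y (take_type S u w) - y S) ^+ 2).
  by rewrite mul1r ler_pdivlMl // mulr1.
rewrite !mulNr; lra.
Qed.

Lemma FF_bnd (lo hi : R) (S : {set T}) : (forall v, lo <= fit r S v <= hi) ->
  #|T|%:R * lo <= FF S <= #|T|%:R * hi.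
Proof.
move=> H; apply/andP; split.
  apply: (le_trans _ (ler_sum _ (fun v _ => proj1 (andP (H v))))).
  by rewrite sumr_const cardT -cardE mulr_natl.
apply: (le_trans (ler_sum _ (fun v _ => proj2 (andP (H v))))).
by rewrite sumr_const cardT -cardE mulr_natl.
Qed.

Lemma DD_bnd (lo hi : R) (S : {set T}) v : (forall v, lo <= fit r S v <= hi) ->
  (deg e v)%:R * lo <= DD S v <= (deg e v)%:R * hi.
Proof.
move=> H; apply/andP; split.
  by rewrite -sum_deg; apply: ler_sum => x _; case/andP: (H x).
by rewrite -sum_deg; apply: ler_sum => x _; case/andP: (H x).
Qed.

Lemma fit_ge1 (S : {set T}) v : 1 <= r -> 1 <= fit r S v <= r.
Proof. by move=> h; rewrite /fit; case: ifP => _; rewrite ?lexx ?h. Qed.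

Lemma fit_le1 (S : {set T}) v : r <= 1 -> r <= fit r S v <= 1.
Proof. by move=> h; rewrite /fit; case: ifP => _; rewrite ?lexx ?h. Qed.

Variables (d1 d2 : nat).
Hypothesis d1pos : (1 <= d1)%N.
Hypothesis d12 : (d1 <= d2)%N.
Hypothesis bideg : bidegreed e d1 d2.

Definition q v := lam * (deg e v)%:R + (1 - lam) * ((d1%:R + d2%:R) - (deg e v)%:R).
Definition pi v := 1 / q v.
Definition psi (S : {set T}) := \sum_(v in S) pi v.

Lemma d1posR : 0 < (d1%:R : R).
Proof. by rewrite ltr0n. Qed.
Lemma d12R : (d1%:R : R) <= d2%:R.
Proof. by rewrite ler_nat. Qed.

Lemma deg_cases v : (deg e v)%:R = d1%:R :> R \/ (deg e v)%:R = d2%:R :> R.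
Proof. by case: (bideg v) => ->; [left|right]. Qed.

Lemma q_bnd v : d1%:R <= q v <= d2%:R.
Proof.
have h1 := d1posR; have h2 := d12R; case/andP: lam01 => l0 l1.
rewrite /q; case: (deg_cases v) => ->; apply/andP; split; nra.
Qed.

Lemma pi_bnd v : 1 / d2%:R <= pi v <= 1 / d1%:R.
Proof.
have h1 := d1posR; have h2 := d12R; case/andP: (q_bnd v) => q1 q2.
rewrite /pi; apply/andP; split; rewrite ler_frac ?mul1r //; lra.
Qed.

Lemma pi_pos v : 0 < pi v.
Proof.
have h1 := d1posR; case/andP: (q_bnd v) => q1 q2.
by rewrite /pi divr_gt0 //; lra.
Qed.

Lemma psi_tt (S : {set T}) u w : psi (take_type S u w) - psi S =
  if u \in S then (if w \in S then 0 else pi w) else (if w \in S then - pi w else 0).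
Proof.
rewrite /take_type /psi; case: (u \in S); case: (boolP (w \in S)) => hw.
- rewrite (_ : w |: S = S) ?subrr //; apply/setP => v; rewrite !inE.
  by case: eqP => // ->.
- by rewrite big_setU1 //= addrK.
- by rewrite (big_setD1 w hw) /= opprD addrCA subrr addr0.
- rewrite (_ : S :\ w = S) ?subrr //; apply/setP => v; rewrite !inE.
  by case: eqP => // ->; rewrite (negbTE hw).
Qed.

Lemma mart u w : lam * (pi w / (deg e u)%:R - pi u / (deg e w)%:R)
  + (1 - lam) * (pi w / (deg e w)%:R - pi u / (deg e u)%:R) = 0.
Proof. exact: (mart_id lam01 d1posR d12R (deg_cases u) (deg_cases w)). Qed.

Lemma DS_sym_ge0 f : (forall u w, e u w -> 0 <= f u w + f w u) -> 0 <= DS f.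
Proof.
move=> H; have : 0 <= DS f + DS f.
  by rewrite {2}DS_sym -DSD; apply: DS_ge0.
lra.
Qed.

Lemma degposR v : 0 < (deg e v)%:R :> R.
Proof. by rewrite ltr0n degpos. Qed.

Lemma nposR : 0 < #|T|%:R :> R.
Proof. by rewrite ltr0n. Qed.

Lemma drift_ge (S : {set T}) : 1 <= r ->
  0 <= DS (fun u w => Wt S u w * (psi (take_type S u w) - psi S)).
Proof.
move=> r1; apply: DS_sym_ge0 => u w euw; rewrite !psi_tt.
have [Fl Fh] := andP (FF_bnd (fun v => fit_ge1 S v r1)).
have edge a b : a \in S -> b \notin S ->
   0 <= Wt S a b * pi b + Wt S b a * - pi a.
  move=> ha hb; rewrite mulrN /Wt /fit ha (negbTE hb).
  have [Dal _] := andP (DD_bnd a (fun v => fit_ge1 S v r1)).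
  have [_ Dbh] := andP (DD_bnd b (fun v => fit_ge1 S v r1)).
  apply: edge_ge; rewrite ?nposR ?FF_pos ?degposR ?DD_pos ?mart //.
  - exact: ltW (pi_pos _).
  - exact: ltW (pi_pos _).
  - by rewrite mulr1 in Fl.
  - by rewrite mulrC.
  - by rewrite mulr1 in Dal.
  - by rewrite mulrC.
case: (boolP (u \in S)) => hu; case: (boolP (w \in S)) => hw.
- by rewrite !mulr0 addr0.
- exact: edge.
- by rewrite addrC; apply: edge.
- by rewrite !mulr0 addr0.
Qed.

Lemma DS_sym_le0 f : (forall u w, e u w -> f u w + f w u <= 0) -> DS f <= 0.
Proof.
move=> H; have : DS f + DS f <= 0.
  rewrite {2}DS_sym -DSD -oppr_ge0 -mulN1r -DSZ; apply: DS_ge0 => u w euw.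
  by rewrite mulN1r oppr_ge0; apply: H.
lra.
Qed.

Lemma drift_le (S : {set T}) : r <= 1 ->
  DS (fun u w => Wt S u w * (psi (take_type S u w) - psi S)) <= 0.
Proof.
move=> r1; apply: DS_sym_le0 => u w euw; rewrite !psi_tt.
have [Fl Fh] := andP (FF_bnd (fun v => fit_le1 S v r1)).
have edge a b : a \in S -> b \notin S ->
   Wt S a b * pi b + Wt S b a * - pi a <= 0.
  move=> ha hb; rewrite mulrN /Wt /fit ha (negbTE hb).
  have [_ Dah] := andP (DD_bnd a (fun v => fit_le1 S v r1)).
  have [Dbl _] := andP (DD_bnd b (fun v => fit_le1 S v r1)).
  apply: edge_le; rewrite ?nposR ?FF_pos ?degposR ?DD_pos ?mart //.
  - exact: ltW (pi_pos _).
  - exact: ltW (pi_pos _).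
  - by rewrite mulr1 in Fh.
  - by rewrite mulrC.
  - by rewrite mulr1 in Dah.
  - by rewrite mulrC.
case: (boolP (u \in S)) => hu; case: (boolP (w \in S)) => hw.
- by rewrite !mulr0 addr0.
- exact: edge.
- by rewrite addrC; apply: edge.
- by rewrite !mulr0 addr0.
Qed.

Lemma boundary (conn : connected_graph e) (S : {set T}) : ~~ absorbing S ->
  exists a b, [/\ a \in S, b \notin S & e b a].
Proof.
rewrite /absorbing negb_or => /andP[/set0Pn [x xS] nT].
have [y yS] : exists y, y \notin S.
  case: (pickP [pred y | y \notin S]) => [y hy|h]; first by exists y.
  case/negP: nT; apply/eqP/setP => z; rewrite inE.
  by have := h z; rewrite /= => /negbFE.
case: (pickP [pred p : T * T | (p.1 \in S) && (p.2 \notin S) && e p.2 p.1]) => [[a b] /= /andP[/andP[ha hb] hab]|h].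
  by exists a, b.
have cl : closed e S.
  move=> u v euv; have := h (u, v); have := h (v, u) => /=.
  rewrite (esym v u) euv !andbT.
  by case: (u \in S); case: (v \in S).
by have := closed_connect cl (conn x y); rewrite xS (negbTE yS).
Qed.

Lemma deg_le_n v : (deg e v)%:R <= #|T|%:R :> R.
Proof. by rewrite ler_nat /deg max_card. Qed.

Lemma fit_leK (S : {set T}) v : 0 <= fit r S v <= r + 1.
Proof.
have := rpos; rewrite /fit; case: ifP => _ h; apply/andP; split; lra.
Qed.

Lemma var_ge (conn : connected_graph e) (S : {set T}) : ~~ absorbing S ->
  1 / ((r + 1) * #|T|%:R ^+ 2 * d2%:R ^+ 2)
    <= DS (fun u w => Wt S u w * (psi (take_type S u w) - psi S) ^+ 2).
Proof.
move=> nab; have [a [b [ha hb eba]]] := boundary conn nab.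
apply: le_trans (DS_ge1 _ eba); last first.
  by move=> u w _; apply: mulr_ge0; [exact: Wt_ge0 | exact: sqr_ge0].
rewrite psi_tt (negbTE hb) ha sqrrN.
set N := #|T|%:R; set K := r + 1.
have N0 : 0 < N := nposR.
have K0 : 0 < K by rewrite /K; have := rpos; lra.
have d20 : 0 < d2%:R :> R by have := d1posR; have := d12R; lra.
have [_ Fh] := andP (FF_bnd (fun v => fit_leK S v)).
have [_ Dah] := andP (DD_bnd a (fun v => fit_leK S v)).
have dbn := deg_le_n b; have dan := deg_le_n a.
have X0 : 0 < 1 / (K * N ^+ 2) by rewrite divr_gt0 // mulr_gt0 // exprn_gt0.
have hA : 1 / (K * N ^+ 2) <= 1 / FF S * (1 / (deg e b)%:R).
  rewrite mulf_div mulr1 ler_frac ?mulr_gt0 ?FF_pos ?degposR ?exprn_gt0 // !mul1r.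
  rewrite expr2 mulrA; apply: ler_pM; [exact: ltW (FF_pos S)|exact: ltW (degposR b)| by rewrite mulrC | exact: dbn].
have hB : 1 / (K * N ^+ 2) <= 1 / N * (1 / DD S a).
  rewrite mulf_div mulr1 ler_frac ?mulr_gt0 ?DD_pos ?exprn_gt0 // !mul1r.
  rewrite expr2 mulrCA; apply: ler_pM; [exact: ltW N0 | exact: ltW (DD_pos S a) | exact: lexx | ].
  apply: (le_trans Dah); rewrite mulrC; apply: ler_wpM2l; [exact: ltW K0| exact: dan].
have hW : 1 / (K * N ^+ 2) <= Wt S b a.
  rewrite /Wt /fit (negbTE hb).
  case/andP: lam01 => l0 l1.
  have := ler_wpM2l l0 hA; have : 0 <= 1 - lam by lra.
  move=> l2; have := ler_wpM2l l2 hB; rewrite -/N; lra.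
have hp : (1 / d2%:R) ^+ 2 <= pi a ^+ 2.
  case/andP: (pi_bnd a) => p1 _.
  rewrite lerXn2r // nnegrE; [exact: divr_ge0 ler01 (ltW d20) | exact: ltW (pi_pos a)].
apply: le_trans (ler_pM _ _ hW hp).
- by rewrite expr_div_n expr1n !mulf_div !mul1r mulrA.
- exact: ltW.
- exact: exprn_ge0 (divr_ge0 ler01 (ltW d20)).
Qed.

Lemma DS_ext f g : (forall u w, f u w = g u w) -> DS f = DS g.
Proof. by move=> H; apply: eq_bigr => u _; apply: eq_bigr => w _. Qed.

Lemma psi_bnd (S : {set T}) : 0 <= psi S <= #|T|%:R / d1%:R.
Proof.
apply/andP; split; first by apply: sumr_ge0 => v _; exact: ltW (pi_pos v).
apply: (le_trans (y := \sum_(v in S) (1 / d1%:R))).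
  by apply: ler_sum => v _; case/andP: (pi_bnd v).
rewrite sumr_const -(mulr_natl (1 / d1%:R) #|S|) mulrA mulr1 ler_pM2r ?ler_nat ?max_card //.
by rewrite invr_gt0 d1posR.
Qed.

Lemma final_bound (conn : connected_graph e) k (S : {set T}) :
  trunc_time e r lam k S <= 3 * (r + 1) * #|T|%:R ^+ 4 * (d2%:R / d1%:R) ^+ 2.
Proof.
pose M : R := #|T|%:R / d1%:R.
pose s2 : R := 1 / ((r + 1) * #|T|%:R ^+ 2 * d2%:R ^+ 2).
have N0 := nposR; have D1 := d1posR; have D12 := d12R.
have s20 : 0 < s2.
  rewrite /s2 divr_gt0 // !mulr_gt0 ?exprn_gt0 //; have := rpos; lra.
have M0 : 0 <= M by rewrite /M divr_ge0 // ltW.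
have fin (y : {set T} -> R) : (forall S, 0 <= y S <= M) ->
    (4 * M ^+ 2 - (y S + M) ^+ 2) / s2 <= 3 * (r + 1) * #|T|%:R ^+ 4 * (d2%:R / d1%:R) ^+ 2.
  move=> yb; case/andP: (yb S) => y0 y1.
  apply: (le_trans (y := 3 * M ^+ 2 / s2)).
    rewrite ler_pM2r ?invr_gt0 //; nra.
  have r10 : r + 1 != 0 by rewrite gt_eqF //; have := rpos; lra.
  have d20 : d2%:R != 0 :> R by rewrite gt_eqF //; lra.
  rewrite le_eqVlt; apply/orP; left; apply/eqP; rewrite /M /s2; field.
  by rewrite r10 d20 !gt_eqF.
have [r1|r1] := lerP 1 r.
  apply: le_trans (fin psi psi_bnd).
  apply: trunc_bound => //; first exact: psi_bnd.
  move=> S' nab; split; first exact: drift_ge.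
  exact: var_ge.
have yb S' : 0 <= M - psi S' <= M.
  by case/andP: (psi_bnd S') => h1 h2; apply/andP; split; rewrite /M; lra.
apply: le_trans (fin (fun S => M - psi S) yb).
apply: (trunc_bound (y := fun S0 => M - psi S0)) => // S' nab; split.
  rewrite (DS_ext (g := fun u w => -1 * (Wt S' u w * (psi (take_type S' u w) - psi S')))).
    by rewrite DSZ mulN1r oppr_ge0; apply: drift_le; exact: ltW.
  by move=> u w; ring.
rewrite (DS_ext (g := fun u w => Wt S' u w * (psi (take_type S' u w) - psi S') ^+ 2)).
  exact: var_ge.
by move=> u w; ring.
Qed.
End Aux.

Theorem mainTheorem11 (R : realType) :
  (forall r : R, 0 < r -> r != 1 ->
    exists C : R, 0 < C /\
      forall (T : finType) (e : rel T) (d1 d2 : nat),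
        simple_graph e -> connected_graph e -> (1 < #|T|)%N ->
        (1 <= d1)%N -> (d1 <= d2)%N -> bidegreed e d1 d2 ->
        forall (lam : R), 0 <= lam <= 1 ->
        forall (S0 : {set T}) (k : nat),
          trunc_time e r lam k S0
            <= C * (#|T|%:R) ^+ 4 * ((d2%:R / d1%:R) ^+ 2))
  /\
  (exists C : R, 0 < C /\
      forall (T : finType) (e : rel T) (d1 d2 : nat),
        simple_graph e -> connected_graph e -> (1 < #|T|)%N ->
        (1 <= d1)%N -> (d1 <= d2)%N -> bidegreed e d1 d2 ->
        forall (lam : R), 0 <= lam <= 1 ->
        forall (S0 : {set T}) (k : nat),
          trunc_time e 1 lam k S0
            <= C * (#|T|%:R) ^+ 4 * ((d2%:R / d1%:R) ^+ 4)).
Proof.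
have degp (T : finType) (e : rel T) (d1 d2 : nat) : (1 <= d1)%N -> (d1 <= d2)%N ->
    bidegreed e d1 d2 -> forall v, (0 < deg e v)%N.
  by move=> h1 h2 hb v; case: (hb v) => ->; [|apply: leq_trans h2].
split.
  move=> r rpos _; exists (3 * (r + 1)); split; first by have := rpos; lra.
  move=> T e d1 d2 [esym _] conn n1 d1p d12 bd lam l01 S0 k.
  apply: final_bound => //; [exact: degp bd | exact: ltn_trans n1].
exists 6; split; first by lra.
move=> T e d1 d2 [esym _] conn n1 d1p d12 bd lam l01 S0 k.
apply: le_trans (final_bound esym ltr01 l01 (degp _ _ _ _ d1p d12 bd) (ltn_trans (ltnSn 0) n1) d1p d12 bd conn k S0) _.
have a1 : 1 <= d2%:R / d1%:R :> R.
  by rewrite ler_pdivlMr ?ltr0n // mul1r ler_nat.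
set x := d2%:R / d1%:R.
have a2 : 1 <= x ^+ 2 := exprn_ege1 2 a1.
rewrite (_ : x ^+ 4 = x ^+ 2 * x ^+ 2); last by rewrite -exprD.
have N4 : 0 <= #|T|%:R ^+ 4 :> R by apply: exprn_ge0; apply: ler0n.
set y := x ^+ 2 in a2 *; set N := #|T|%:R ^+ 4 in N4 *.
have h : 0 <= N * y * (y - 1).
  by apply: mulr_ge0; [apply: mulr_ge0 => //; lra | lra].
rewrite -subr_ge0; rewrite (_ : 6 * N * (y * y) - 3 * (1 + 1) * N * y = 6 * (N * y * (y - 1))); last by ring.
by apply: mulr_ge0.
Qed.
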